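(* Let $n,m$ be positive integers, $A\in\mathbb{R}^{n\times n}$, $B\in\mathbb{R}^{m\times n}$, and let $p:\mathbb{R}^n_+\to\mathbb{R}^n_+$, $c:\mathbb{R}^n_+\to\mathbb{R}^n_+$, $r:\mathbb{R}^m_+\to\mathbb{R}^m_+$ be maps. Put $\Omega=\mathbb{R}^n_+\times\mathbb{R}^n_+\times\mathbb{R}^m_+$ and define $g:\Omega\to\mathbb{R}^{2n+m}$ by $$g(x,\lambda,v)=\big((I-A)^T\lambda-p(x)-B^Tv;\ c(\lambda)-(I-A)x;\ Bx-r(v)\big).$$ For $y^*=(x^*,\lambda^*,v^* )\in\Omega$ the following are equivalent: (i) $x^*\in\operatorname{argmin}\{\langle p(x^* ),X\rangle : (I-A)X\ge c(\lambda^* ),\ BX\le r(v^* ),\ X\in\mathbb{R}^n_+\}$ and $(\lambda^*,v^* )\in\operatorname{argmax}\{\langle c(\lambda^* ),\Lambda\rangle-\langle r(v^* ),V\rangle : (I-A)^T\Lambda-B^TV\le p(x^* ),\ \Lambda\in\mathbb{R}^n_+,\ V\in\mathbb{R}^m_+\}$; (ii) $\langle g(y^* ),y-y^*\rangle\le 0$ for all $y\in\Omega$.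
   Context: Standing assumptions of the paper: $A$ (the balance matrix) has no zero rows and columns and is productive, i.e. for every $c\in\mathbb{R}^n_+$ the system $x-Ax=c$ has a solution $x\in\mathbb{R}^n_+$; $B$ (the technological matrix) has no zero row and no zero column. Vector inequalities are componentwise and $\langle\cdot,\cdot\rangle$ is the Euclidean inner product. A triple $y^*$ satisfying (i) is called a nonlinear production–consumption equilibrium (NPCE). *)

(* Defs.v *)
From HB Require Import structures.
From mathcomp Require Import all_boot all_order all_algebra.
From mathcomp Require Import reals.
Set Implicit Arguments. Unset Strict Implicit. Unset Printing Implicit Defensive.
Import Order.TTheory GRing.Theory Num.Theory.
Local Open Scope ring_scope.

Section Defs.
Variable R : realType.

Definition nonnegv {k} (v : 'cV[R]_k) : Prop := forall i, 0 <= v i 0.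

Definition lev {k} (u v : 'cV[R]_k) : Prop := forall i, u i 0 <= v i 0.

Definition dotv {k} (u v : 'cV[R]_k) : R := \sum_(i < k) u i 0 * v i 0.

Definition dot3 {n m} (a b : 'cV[R]_n * 'cV[R]_n * 'cV[R]_m) : R :=
  dotv a.1.1 b.1.1 + dotv a.1.2 b.1.2 + dotv a.2 b.2.

Definition no_zero_rows {k l} (M : 'M[R]_(k, l)) : Prop :=
  forall i, exists j, M i j != 0.
Definition no_zero_cols {k l} (M : 'M[R]_(k, l)) : Prop :=
  forall j, exists i, M i j != 0.
Definition productive {n} (A : 'M[R]_n) : Prop :=
  forall c : 'cV[R]_n, nonnegv c ->
    exists x : 'cV[R]_n, nonnegv x /\ x - A *m x = c.

(* maps R^k_+ -> R^k_+ (represented as total maps with the range condition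
   required on the nonnegative orthant) *)
Definition maps_orthant {k l} (f : 'cV[R]_k -> 'cV[R]_l) : Prop :=
  forall x, nonnegv x -> nonnegv (f x).

Definition gmap {n m} (A : 'M[R]_n) (B : 'M[R]_(m, n))
  (p c : 'cV[R]_n -> 'cV[R]_n) (r : 'cV[R]_m -> 'cV[R]_m)
  (y : 'cV[R]_n * 'cV[R]_n * 'cV[R]_m) : 'cV[R]_n * 'cV[R]_n * 'cV[R]_m :=
  let: (x, lam, v) := y in
  ((1%:M - A)^T *m lam - p x - B^T *m v,
   c lam - (1%:M - A) *m x,
   B *m x - r v).

Definition in_Omega {n m} (y : 'cV[R]_n * 'cV[R]_n * 'cV[R]_m) : Prop :=
  nonnegv y.1.1 /\ nonnegv y.1.2 /\ nonnegv y.2.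

Definition primal_feasible {n m} (A : 'M[R]_n) (B : 'M[R]_(m, n))
  (cc : 'cV[R]_n) (rr : 'cV[R]_m) (X : 'cV[R]_n) : Prop :=
  lev cc ((1%:M - A) *m X) /\ lev (B *m X) rr /\ nonnegv X.

Definition primal_argmin {n m} (A : 'M[R]_n) (B : 'M[R]_(m, n))
  (pp cc : 'cV[R]_n) (rr : 'cV[R]_m) (Xs : 'cV[R]_n) : Prop :=
  primal_feasible A B cc rr Xs /\
  forall X, primal_feasible A B cc rr X -> dotv pp Xs <= dotv pp X.

Definition dual_feasible {n m} (A : 'M[R]_n) (B : 'M[R]_(m, n))
  (pp : 'cV[R]_n) (L : 'cV[R]_n) (V : 'cV[R]_m) : Prop :=
  lev ((1%:M - A)^T *m L - B^T *m V) pp /\ nonnegv L /\ nonnegv V.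

Definition dual_argmax {n m} (A : 'M[R]_n) (B : 'M[R]_(m, n))
  (pp cc : 'cV[R]_n) (rr : 'cV[R]_m) (Ls : 'cV[R]_n) (Vs : 'cV[R]_m) : Prop :=
  dual_feasible A B pp Ls Vs /\
  forall L V, dual_feasible A B pp L V ->
    dotv cc L - dotv rr V <= dotv cc Ls - dotv rr Vs.

End Defs.

(* Main.v *)
Require Import Defs.
From HB Require Import structures.
From mathcomp Require Import all_boot all_order all_algebra.
From mathcomp Require Import reals.
From mathcomp Require Import ring lra.
Import Order.TTheory GRing.Theory Num.Theory.
Local Open Scope ring_scope.
From Stdlib Require List.
Definition cons (R : realFieldType) := ((nat -> R) * R)%type.
Definition sat {R : realFieldType} N (x : nat -> R) (c : cons R) : Prop :=
  \sum_(i < N) c.1 i * x i <= c.2.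
Definition feas {R : realFieldType} N (S : list (cons R)) :=
  exists x, forall c, List.In c S -> sat N x c.
Definition addc {R : realFieldType} (c d : cons R) : cons R :=
  (fun i => c.1 i + d.1 i, c.2 + d.2).
Definition scalec {R : realFieldType} (a : R) (c : cons R) : cons R :=
  (fun i => a * c.1 i, a * c.2).
Inductive deriv {R : realFieldType} (S : list (cons R)) : cons R -> Prop :=
| dIn c : List.In c S -> deriv S c
| dAdd c d : deriv S c -> deriv S d -> deriv S (addc c d)
| dScale a c : 0 <= a -> deriv S c -> deriv S (scalec a c).

Definition comb {R : realFieldType} k (p q : cons R) :=
  addc (scalec (- q.1 k) p) (scalec (p.1 k) q).
Definition elimv {R : realFieldType} k (S : list (cons R)) :=
  List.app (List.filter (fun c : cons R => c.1 k == 0) S)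
  (List.flat_map (fun p => List.map (comb k p)
       (List.filter (fun c : cons R => c.1 k < 0) S))
     (List.filter (fun c : cons R => 0 < c.1 k) S)).

Lemma deriv_trans {R : realFieldType} (S S' : list (cons R)) c :
  (forall d, List.In d S' -> deriv S d) -> deriv S' c -> deriv S c.
Proof.
move=> h; elim=> [d /h //|d e _ h1 _ h2|a d ha _ h1]; by constructor.
Qed.

Lemma deriv_coef {R : realFieldType} (S' : list (cons R)) k c :
  (forall d, List.In d S' -> d.1 k = 0) -> deriv S' c -> c.1 k = 0.
Proof.
move=> h; elim=> [d /h //|d e _ h1 _ h2|a d ha _ h1] /=.
- by rewrite h1 h2 addr0.
- by rewrite h1 mulr0.
Qed.

Lemma elim_mem {R : realFieldType} k (S : list (cons R)) d :
  List.In d (elimv k S) ->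
  (List.In d S /\ d.1 k = 0) \/
  exists p q, List.In p S /\ List.In q S /\ 0 < p.1 k /\ q.1 k < 0 /\ d = comb k p q.
Proof.
move/List.in_app_iff => [/List.filter_In [h1 /eqP h2]|]; first by left.
move/List.in_flat_map => [p [/List.filter_In [hp1 hp2] /List.in_map_iff [q [<- /List.filter_In [hq1 hq2]]]]].
by right; exists p, q.
Qed.

Lemma elim_deriv {R : realFieldType} k (S : list (cons R)) d :
  List.In d (elimv k S) -> deriv S d.
Proof.
move/elim_mem => [[h _]|[p [q [hp [hq [hp1 [hq1 ->]]]]]]]; first by constructor.
apply: dAdd; apply: dScale; try by constructor.
- by rewrite oppr_ge0 ltW.
- exact: ltW.
Qed.

Lemma elim_coef {R : realFieldType} k (S : list (cons R)) d :
  List.In d (elimv k S) -> d.1 k = 0.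
Proof.
move/elim_mem => [[_ ->]//|[p [q [_ [_ [_ [_ ->]]]]]]] /=.
by rewrite mulNr mulrC addNr.
Qed.

Lemma sandwich {R : realFieldType} (l u : list R) :
  (forall a b, List.In a l -> List.In b u -> a <= b) ->
  exists t, (forall a, List.In a l -> a <= t) /\ (forall b, List.In b u -> t <= b).
Proof.
move=> h.
pose m0 := List.fold_right Num.min 0 u.
have hm0 : forall b, List.In b u -> m0 <= b.
  rewrite /m0; clear m0 h; elim: u => [//|b0 u IH] b /= [->|hb].
    by rewrite ge_min lexx.
  by rewrite ge_min (IH _ hb) orbT.
exists (List.fold_right Num.max m0 l); split.
  clear h hm0; elim: l => [//|a0 l IH] a /= [->|ha].
    by rewrite le_max lexx.
  by rewrite le_max (IH _ ha) orbT.
move=> b hb; elim: l h => [|a0 l IH] h /=; first exact: hm0.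
rewrite ge_max (h a0 b) //=; first (apply: IH => a b' ha hb'; apply: h => //=; by right).
by left.
Qed.

Lemma dec0 {R : realFieldType} (S : list (cons R)) :
  (forall c, List.In c S -> 0 <= c.2) \/ exists c, List.In c S /\ c.2 < 0.
Proof.
elim: S => [|c S [IH|[d [hd1 hd2]]]]; first by left.
- case: (boolP (c.2 < 0)) => h.
    by right; exists c; split => //; left.
  left => d /= [<-|hd]; last exact: IH.
  by rewrite leNgt.
- by right; exists d; split => //; right.
Qed.

Lemma lift_feas {R : realFieldType} k (S : list (cons R)) :
  feas k (elimv k S) -> feas k.+1 S.
Proof.
move=> [x hx].
pose sp (c : cons R) := \sum_(i < k) c.1 i * x i.
pose lows := List.map (fun q : cons R => (q.2 - sp q) / q.1 k)
   (List.filter (fun c : cons R => c.1 k < 0) S).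
pose ups := List.map (fun p : cons R => (p.2 - sp p) / p.1 k)
   (List.filter (fun c : cons R => 0 < c.1 k) S).
have hlu : forall a b, List.In a lows -> List.In b ups -> a <= b.
  move=> a b /List.in_map_iff [q [<- /List.filter_In [hq hqk]]].
  move=> /List.in_map_iff [p [<- /List.filter_In [hp hpk]]].
  have hc : List.In (comb k p q) (elimv k S).
    apply/List.in_app_iff; right; apply/List.in_flat_map; exists p; split.
      by apply/List.filter_In.
    by apply/List.in_map_iff; exists q; split => //; apply/List.filter_In.
  have := hx _ hc; rewrite /sat /=.
  under eq_bigr do rewrite mulrDl -!mulrA.
  rewrite big_split /= -!mulr_sumr -/(sp p) -/(sp q) => hs.
  set aa := (q.2 - sp q) / q.1 k.
  have hqk' : q.1 k != 0 by rewrite ltr0_neq0.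
  have ha : aa * q.1 k = q.2 - sp q by rewrite /aa divfK.
  rewrite ler_pdivlMr //.
  have hq0 : 0 < - q.1 k by rewrite oppr_gt0.
  rewrite -(ler_pM2l hq0).
  nra.
have [t [ht1 ht2]] := sandwich _ _ hlu.
exists (fun i => if i == k then t else x i) => c hc.
rewrite /sat big_ord_recr /= eqxx.
have -> : \sum_(i < k) c.1 (widen_ord (leqnSn k) i) *
     (if widen_ord (leqnSn k) i == k :> nat then t else x (widen_ord (leqnSn k) i)) = sp c.
  by apply: eq_bigr => i _; rewrite /= (ltn_eqF (ltn_ord i)).
case: (ltrgtP (c.1 k) 0) => hck.
- have : (c.2 - sp c) / c.1 k <= t.
    apply: ht1; apply/List.in_map_iff; exists c; split => //; by apply/List.filter_In.
  rewrite ler_ndivrMr //; lra.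
- have : t <= (c.2 - sp c) / c.1 k.
    apply: ht2; apply/List.in_map_iff; exists c; split => //; by apply/List.filter_In.
  rewrite ler_pdivlMr //; lra.
- have hc' : List.In c (elimv k S).
    by apply/List.in_app_iff; left; apply/List.filter_In; rewrite hck eqxx.
  have := hx _ hc'; rewrite /sat -/(sp c) hck mul0r addr0 //.
Qed.

Lemma fm {R : realFieldType} N : forall (S : list (cons R)), ~ feas N S ->
  exists c, deriv S c /\ (forall i, (i < N)%N -> c.1 i = 0) /\ c.2 < 0.
Proof.
elim: N => [|k IH] S hS.
  case: (dec0 S) => [h|[c [hc hc2]]].
    by exfalso; apply: hS; exists (fun _ => 0) => c hc; rewrite /sat big_ord0; exact: h.
  by exists c; split; [constructor|].
have hE : ~ feas k (elimv k S) by move=> /lift_feas.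
have [c [hd [hz hneg]]] := IH _ hE.
exists c; split; first exact: deriv_trans (@elim_deriv _ k S) hd.
split => // i; rewrite ltnS leq_eqVlt => /orP[/eqP->|]; last exact: hz.
exact: deriv_coef (@elim_coef _ k S) hd.
Qed.
Lemma in_enum_In (T : finType) (i : T) : List.In i (enum T).
Proof.
have : i \in enum T by rewrite mem_enum.
elim: (enum T) => [//|a s IH]; rewrite in_cons => /orP[/eqP->|h]; [by left|by right; apply: IH].
Qed.

Section DotLemmas.
Context {R : realType}.

Lemma dotvDr {k} (u v w : 'cV[R]_k) : dotv u (v + w) = dotv u v + dotv u w.
Proof. by rewrite /dotv -big_split; apply: eq_bigr => i _; rewrite mxE mulrDr. Qed.
Lemma dotvBr {k} (u v w : 'cV[R]_k) : dotv u (v - w) = dotv u v - dotv u w.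
Proof. by rewrite /dotv -sumrB; apply: eq_bigr => i _; rewrite !mxE mulrBr. Qed.
Lemma dotvBl {k} (u v w : 'cV[R]_k) : dotv (u - v) w = dotv u w - dotv v w.
Proof. by rewrite /dotv -sumrB; apply: eq_bigr => i _; rewrite !mxE mulrBl. Qed.
Lemma dotvZr {k} (u v : 'cV[R]_k) a : dotv u (a *: v) = a * dotv u v.
Proof. by rewrite /dotv mulr_sumr; apply: eq_bigr => i _; rewrite mxE mulrCA. Qed.
Lemma dotvNl {k} (u v : 'cV[R]_k) : dotv (- u) v = - dotv u v.
Proof. by rewrite /dotv -sumrN; apply: eq_bigr => i _; rewrite mxE mulNr. Qed.
Lemma dotv0r {k} (u : 'cV[R]_k) : dotv u 0 = 0.
Proof. by rewrite /dotv big1 // => i _; rewrite mxE mulr0. Qed.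
Lemma dotv0l {k} (u : 'cV[R]_k) : dotv 0 u = 0.
Proof. by rewrite /dotv big1 // => i _; rewrite mxE mul0r. Qed.
Lemma dotvC {k} (u v : 'cV[R]_k) : dotv u v = dotv v u.
Proof. by apply: eq_bigr => i _; rewrite mulrC. Qed.
Lemma dotv_tr {k l} (N : 'M[R]_(k, l)) u X : dotv (N^T *m u) X = dotv u (N *m X).
Proof.
rewrite /dotv; under eq_bigr do rewrite mxE big_distrl /=.
rewrite exchange_big; apply: eq_bigr => j _; rewrite mxE big_distrr; apply: eq_bigr => i _ /=.
by rewrite !mxE mulrA [u j 0 * _]mulrC.
Qed.
Lemma dotv_le {k} {u w X : 'cV[R]_k} : lev u w -> nonnegv X -> dotv u X <= dotv w X.
Proof. by move=> h hX; apply: ler_sum => i _; apply: ler_wpM2r. Qed.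
Lemma dotv_delta {k} (u : 'cV[R]_k) j : dotv u (delta_mx j 0) = u j 0.
Proof.
rewrite /dotv (bigD1 j) //= mxE !eqxx mulr1 big1 ?addr0 // => i /negbTE hi.
by rewrite mxE hi mulr0.
Qed.
Lemma trdelta {k l} (N : 'M[R]_(k, l)) i j : (N^T *m (delta_mx i 0 : 'cV_k)) j 0 = N i j.
Proof. by rewrite -colE !mxE. Qed.

Definition rowv {k l} (N : 'M[R]_(k, l)) i : 'cV[R]_l := \col_j N i j.
Lemma dotv_rowv {k l} (N : 'M[R]_(k, l)) i X : dotv (rowv N i) X = (N *m X) i 0.
Proof. by rewrite /dotv mxE; apply: eq_bigr => j _; rewrite mxE. Qed.

Definition ext {n} (u : 'cV[R]_n) (s : R) : nat -> R :=
  fun j => if (insub j : option 'I_n) is Some i then u i 0 else s.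
Lemma ext_val n (u : 'cV[R]_n) s (j : 'I_n) : ext u s j = u j 0.
Proof. by rewrite /ext valK. Qed.
Lemma ext_n n (u : 'cV[R]_n) s : ext u s n = s.
Proof. by rewrite /ext insubF ?ltnn. Qed.
Lemma ext_sum n (u : 'cV[R]_n) s (x : nat -> R) :
  \sum_(i < n.+1) ext u s i * x i = dotv u (\col_(j < n) x j) + s * x n.
Proof.
rewrite big_ord_recr /= ext_n; congr (_ + _).
by apply: eq_bigr => i _; rewrite mxE /= ext_val.
Qed.

Lemma weak {n m} {M : 'M[R]_n} {B : 'M[R]_(m, n)} {pp cc rr X L V} :
  lev cc (M *m X) -> nonnegv X -> lev (B *m X) rr ->
  lev (M^T *m L - B^T *m V) pp -> nonnegv L -> nonnegv V ->
  dotv cc L - dotv rr V <= dotv pp X.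
Proof.
move=> h1 hX h2 h3 hL hV.
have e1 := dotv_le h3 hX; rewrite dotvBl !dotv_tr in e1.
have e2 := dotv_le h1 hL; have e3 := dotv_le h2 hV.
rewrite (dotvC L) (dotvC V) in e1; lra.
Qed.
Lemma mxDE {k l} (A B : 'M[R]_(k,l)) i j : (A + B) i j = A i j + B i j.
Proof. by rewrite mxE. Qed.
Lemma mxZE {k l} (a : R) (A : 'M[R]_(k,l)) i j : (a *: A) i j = a * A i j.
Proof. by rewrite mxE. Qed.
Lemma mxBE {k l} (A B : 'M[R]_(k,l)) i j : (A - B) i j = A i j - B i j.
Proof. by rewrite !mxE. Qed.
End DotLemmas.
Lemma strong_dual {R : realType} {n m} {M : 'M[R]_n} {B : 'M[R]_(m,n)}
  {pp cc : 'cV[R]_n} {rr : 'cV[R]_m} {xs : 'cV[R]_n} :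
  lev cc (M *m xs) -> lev (B *m xs) rr -> nonnegv xs ->
  (forall X, lev cc (M *m X) -> lev (B *m X) rr -> nonnegv X -> dotv pp xs <= dotv pp X) ->
  exists L V, nonnegv L /\ nonnegv V /\ lev (M^T *m L - B^T *m V) pp /\
     dotv pp xs <= dotv cc L - dotv rr V.
Proof.
move=> f1 f2 f3 hopt.
pose t := dotv pp xs.
pose cM (i : 'I_n) : cons R := (ext (- rowv M i) (cc i 0), 0).
pose cB (i : 'I_m) : cons R := (ext (rowv B i) (- rr i 0), 0).
pose cX (i : 'I_n) : cons R := (ext (- rowv 1%:M i) 0, 0).
pose cs : cons R := (ext (0 : 'cV[R]_n) (-1), 0).
pose co : cons R := (ext pp (- t), -1).
pose S := List.app (List.map cM (enum 'I_n)) (List.app (List.map cB (enum 'I_m))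
            (List.app (List.map cX (enum 'I_n)) [:: cs; co])).
have inM : forall i, List.In (cM i) S.
  by move=> i; apply/List.in_app_iff; left; apply/List.in_map_iff; exists i; split => //; exact: in_enum_In.
have inB : forall i, List.In (cB i) S.
  move=> i; apply/List.in_app_iff; right; apply/List.in_app_iff; left.
  by apply/List.in_map_iff; exists i; split => //; exact: in_enum_In.
have inX : forall i, List.In (cX i) S.
  move=> i; apply/List.in_app_iff; right; apply/List.in_app_iff; right; apply/List.in_app_iff; left.
  by apply/List.in_map_iff; exists i; split => //; exact: in_enum_In.
have ins : List.In cs S.
  by apply/List.in_app_iff; right; apply/List.in_app_iff; right; apply/List.in_app_iff; right; left.
have ino : List.In co S.
  by apply/List.in_app_iff; right; apply/List.in_app_iff; right; apply/List.in_app_iff; right; right; left.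
have hinf : ~ feas n.+1 S.
  move=> [x hx].
  pose X := \col_(j < n) x j.
  have hM : forall i, cc i 0 * x n <= (M *m X) i 0.
    move=> i; have := hx _ (inM i); rewrite /sat ext_sum -/X dotvNl dotv_rowv /=; lra.
  have hB : forall i, (B *m X) i 0 <= rr i 0 * x n.
    move=> i; have := hx _ (inB i); rewrite /sat ext_sum -/X dotv_rowv /=; lra.
  have hX : nonnegv X.
    move=> i; have := hx _ (inX i); rewrite /sat ext_sum -/X dotvNl dotv_rowv mul1mx /=; lra.
  have hs : 0 <= x n.
    have := hx _ ins; rewrite /sat ext_sum -/X dotv0l /=; lra.
  have ho : dotv pp X - t * x n <= -1.
    have := hx _ ino; rewrite /sat ext_sum -/X /=; lra.
  have hs1 : 0 < 1 + x n by lra.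
  pose Y := (1 + x n)^-1 *: (xs + X).
  have := hopt Y.
  rewrite /Y dotvZr dotvDr -/t ler_pdivlMl //.
  have F1 : lev cc (M *m ((1 + x n)^-1 *: (xs + X))).
    move=> i; rewrite -scalemxAr mulmxDr mxE [in X in _ * X]mxE ler_pdivlMl //.
    have := f1 i; have := hM i; idtac; lra.
  have F2 : lev (B *m ((1 + x n)^-1 *: (xs + X))) rr.
    move=> i; rewrite -scalemxAr mulmxDr mxE [in X in _ * X]mxE ler_pdivrMl //.
    have := f2 i; have := hB i; lra.
  have F3 : nonnegv ((1 + x n)^-1 *: (xs + X)).
    move=> i; rewrite mxE [in X in _ * X]mxE; apply: mulr_ge0; first by rewrite invr_ge0 ltW.
    by apply: addr_ge0; [apply: f3|apply: hX].
  move=> /(_ F1 F2 F3); lra.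
have [c [hd [hz hneg]]] := @fm _ _ _ hinf.
have key : forall c, deriv S c -> exists (L : 'cV[R]_n) (V : 'cV[R]_m) (mu : R),
   nonnegv L /\ nonnegv V /\ 0 <= mu /\
   (forall j : 'I_n, c.1 j <= mu * pp j 0 - (M^T *m L) j 0 + (B^T *m V) j 0) /\
   c.1 n <= dotv cc L - dotv rr V - mu * t /\ c.2 = - mu.
  move=> {hd hz hneg} c; elim => [d hin|d e _ [L1 [V1 [mu1 [hL1 [hV1 [hm1 [hj1 [hn1 he1]]]]]]]]
                                     _ [L2 [V2 [mu2 [hL2 [hV2 [hm2 [hj2 [hn2 he2]]]]]]]]
                                 |a d ha _ [L1 [V1 [mu1 [hL1 [hV1 [hm1 [hj1 [hn1 he1]]]]]]]]].
  - have z0 : forall k, nonnegv (0 : 'cV[R]_k) by move=> k i; rewrite mxE.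
    have d0 : forall k (i : 'I_k), nonnegv (delta_mx i 0 : 'cV[R]_k) by move=> k i l; rewrite mxE ler0n.
    move: hin => /List.in_app_iff [/List.in_map_iff [i [<- _]] | /List.in_app_iff
        [/List.in_map_iff [i [<- _]] | /List.in_app_iff [/List.in_map_iff [i [<- _]] | [<-|[<-|[]]]]]].
    + exists (delta_mx i 0), 0, 0; do 3!split => //.
      split; first by move=> j /=; rewrite ext_val trdelta mulmx0 !mxE; lra.
      by rewrite /= ext_n dotv_delta dotv0r oppr0; split => //; lra.
    + exists 0, (delta_mx i 0), 0; do 3!split => //.
      split; first by move=> j /=; rewrite ext_val trdelta mulmx0 !mxE; lra.
      by rewrite /= ext_n dotv_delta dotv0r oppr0; split => //; lra.
    + exists 0, 0, 0; do 3!split => //.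
      split; last by rewrite /= ext_n !dotv0r oppr0; split => //; lra.
      move=> j /=; rewrite ext_val !mulmx0 !mxE; have := ler0n R (i == j); lra.
    + exists 0, 0, 0; do 3!split => //.
      split; last by rewrite /= ext_n !dotv0r oppr0; split => //; lra.
      move=> j /=; rewrite ext_val !mulmx0 !mxE; lra.
    + exists 0, 0, 1; do 3!split => //.
      split; last by rewrite /= ext_n !dotv0r; split => //; lra.
      move=> j /=; rewrite ext_val !mulmx0 !mxE; lra.
  - exists (L1 + L2), (V1 + V2), (mu1 + mu2); split.
      by move=> i; rewrite mxE; apply: addr_ge0.
    split; first by move=> i; rewrite mxE; apply: addr_ge0.
    split; first exact: addr_ge0.
    split.
      move=> j; rewrite !mulmxDr !mxDE /=; have := hj1 j; have := hj2 j; lra.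
    rewrite /= !dotvDr he1 he2; split; [lra | by rewrite opprD].
  - exists (a *: L1), (a *: V1), (a * mu1); split.
      by move=> i; rewrite mxE; apply: mulr_ge0.
    split; first by move=> i; rewrite mxE; apply: mulr_ge0.
    split; first exact: mulr_ge0.
    split.
      move=> j; rewrite -!scalemxAr !mxZE /=; have := ler_wpM2l ha (hj1 j); lra.
    rewrite /= !dotvZr he1; split; last by rewrite mulrN.
    have := ler_wpM2l ha hn1; lra.
have [L [V [mu [hL [hV [hmu [hj [hn he]]]]]]]] := key c hd.
have mu0 : 0 < mu by lra.
have mun : mu != 0 by rewrite gt_eqF.
exists (mu^-1 *: L), (mu^-1 *: V); split.
  by move=> i; rewrite mxE; apply: mulr_ge0; [rewrite invr_ge0 ltW|exact: hL].
split; first by move=> i; rewrite mxE; apply: mulr_ge0; [rewrite invr_ge0 ltW|exact: hV].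
split.
  move=> j; rewrite -!scalemxAr mxBE !mxZE.
  have := hj j; rewrite hz; last by rewrite ltnS ltnW.
  move=> h.
  rewrite -mulrBr ler_pdivrMl //; lra.
rewrite !dotvZr -mulrBr ler_pdivlMl //.
have := hn; rewrite hz ?ltnSn // => h; rewrite -/t; lra.
Qed.
Lemma comp_lemma {R : realType} k (g x0 : 'cV[R]_k) : nonnegv x0 ->
  (forall X, nonnegv X -> dotv g (X - x0) <= 0) -> lev g 0 /\ dotv g x0 = 0.
Proof.
move=> hx h; split.
  move=> j; have := h (x0 + delta_mx j 0).
  rewrite addrC addrK dotv_delta mxE; apply.
  by move=> i; rewrite mxDE; apply: addr_ge0 => //; rewrite mxE ler0n.
have a : dotv g (0 - x0) <= 0 by apply: h => i; rewrite mxE.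
have b : dotv g (x0 + x0 - x0) <= 0.
  by apply: h => i; rewrite mxDE; apply: addr_ge0.
rewrite addrK in b; rewrite dotvBr dotv0r in a; lra.
Qed.

Lemma z0E {R : realType} k (i : 'I_k) : (0 : 'cV[R]_k) i 0 = 0.
Proof. by rewrite mxE. Qed.

Theorem theorem1 (R : realType) (n m : nat) (hn : (0 < n)%N) (hm : (0 < m)%N)
  (A : 'M[R]_n) (B : 'M[R]_(m, n))
  (p c : 'cV[R]_n -> 'cV[R]_n) (r : 'cV[R]_m -> 'cV[R]_m)
  (hA0r : no_zero_rows A) (hA0c : no_zero_cols A) (hAprod : productive A)
  (hB0r : no_zero_rows B) (hB0c : no_zero_cols B)
  (hp : maps_orthant p) (hc : maps_orthant c) (hr : maps_orthant r)
  (xs ls : 'cV[R]_n) (vs : 'cV[R]_m)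
  (hys : in_Omega (xs, ls, vs)) :
  (primal_argmin A B (p xs) (c ls) (r vs) xs /\
   dual_argmax A B (p xs) (c ls) (r vs) ls vs)
  <->
  (forall y : 'cV[R]_n * 'cV[R]_n * 'cV[R]_m, in_Omega y ->
     dot3 (gmap A B p c r (xs, ls, vs)) (y.1.1 - xs, y.1.2 - ls, y.2 - vs) <= 0).
Proof.
case: hys => /= hxs [hls hvs].
have c1 := dotvC ls ((1%:M - A) *m xs); have c2 := dotvC vs (B *m xs).
split.
  move=> [[[pf1 [pf2 pf3]] popt] [[df1 [df2 df3]] dopt]] y [hy1 [hy2 hy3]].
  have [L [V [hL [hV [hLV hval]]]]] :=
    strong_dual pf1 pf2 pf3 (fun X a b c => popt X (conj a (conj b c))).
  have e1 := dopt L V (conj hLV (conj hL hV)).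
  have e2 := weak pf1 pf3 pf2 df1 df2 df3.
  rewrite /gmap /dot3 /= !dotvBr.
  have g1 : lev ((1%:M - A)^T *m ls - p xs - B^T *m vs) 0.
    by move=> j; have := df1 j; rewrite !mxBE z0E; lra.
  have g2 : lev (c ls - (1%:M - A) *m xs) 0.
    by move=> j; have := pf1 j; rewrite !mxBE z0E; lra.
  have g3 : lev (B *m xs - r vs) 0.
    by move=> j; have := pf2 j; rewrite !mxBE z0E; lra.
  have b1 := dotv_le g1 hy1; have b2 := dotv_le g2 hy2; have b3 := dotv_le g3 hy3.
  rewrite !dotv0l in b1 b2 b3.
  rewrite !dotvBl !dotv_tr in b1 b2 b3 *.
  lra.
move=> h.
have [g1le g1x] : lev ((1%:M - A)^T *m ls - p xs - B^T *m vs) 0 /\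
    dotv ((1%:M - A)^T *m ls - p xs - B^T *m vs) xs = 0.
  apply: comp_lemma => // X hX.
  have := h (X, ls, vs) (conj hX (conj hls hvs)).
  by rewrite /gmap /dot3 /= !subrr !dotv0r !addr0.
have [g2le g2x] : lev (c ls - (1%:M - A) *m xs) 0 /\
    dotv (c ls - (1%:M - A) *m xs) ls = 0.
  apply: comp_lemma => // X hX.
  have := h (xs, X, vs) (conj hxs (conj hX hvs)).
  by rewrite /gmap /dot3 /= !subrr !dotv0r add0r addr0.
have [g3le g3x] : lev (B *m xs - r vs) 0 /\ dotv (B *m xs - r vs) vs = 0.
  apply: comp_lemma => // X hX.
  have := h (xs, ls, X) (conj hxs (conj hls hX)).
  by rewrite /gmap /dot3 /= !subrr !dotv0r !add0r.
have pf1 : lev (c ls) ((1%:M - A) *m xs).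
  by move=> j; have := g2le j; rewrite !mxBE z0E; lra.
have pf2 : lev (B *m xs) (r vs).
  by move=> j; have := g3le j; rewrite !mxBE z0E; lra.
have df1 : lev ((1%:M - A)^T *m ls - B^T *m vs) (p xs).
  by move=> j; have := g1le j; rewrite !mxBE z0E; lra.
have hv : dotv (p xs) xs = dotv (c ls) ls - dotv (r vs) vs.
  rewrite !dotvBl !dotv_tr in g1x g2x g3x; lra.
split; split.
- by split.
- move=> X [h1 [h2 h3]]; have := weak h1 h3 h2 df1 hls hvs; lra.
- by split.
- move=> L V [h1 [h2 h3]]; have := weak pf1 hxs pf2 h1 h2 h3; lra.
Qed.
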